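(* For every $\gamma>0$ and every $E>0$ there exists a density operator $\varrho$ with $0<\operatorname{tr}[\varrho H^2]\le E$ such that $$\left\|\widetilde\varrho_{-}-\frac{{\cal N}_{-}(\gamma)[\varrho]}{\operatorname{tr}\big[{\cal N}_{-}(\gamma)[\varrho]\big]}\right\|_1\ \ge\ 1.$$
   Context: ${\cal H}$ is a separable Hilbert space with orthonormal (Fock) basis $\{|n\rangle\}_{n=0}^{\infty}$; $a=\sum_{n\ge1}\sqrt{n}\,|n-1\rangle\langle n|$, $a^{\dagger}=\sum_{n\ge0}\sqrt{n+1}\,|n+1\rangle\langle n|$, $H=a^{\dagger}a$. For a density operator $\varrho$, $\operatorname{tr}[\varrho H^k]=\sum_n n^k\langle n|\varrho|n\rangle$. Ideal photon subtraction output: $\widetilde\varrho_{-}=a\varrho a^{\dagger}/\operatorname{tr}[a\varrho a^{\dagger}]$ (defined when $0<\operatorname{tr}[\varrho H]<\infty$). For $\gamma>0$, the approximate photon subtraction operation is ${\cal N}_{-}(\gamma)[\varrho]=(e^{2\gamma}-1)\,a e^{-\gamma H}\varrho e^{-\gamma H}a^{\dagger}$. $\|X\|_1=\operatorname{tr}\sqrt{X^{\dagger}X}$. *)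

(* Defs.v *)
(* classical reals. Operators on the Fock space are represented
   by their (infinite) matrices in the Fock basis {|n>}. *)
From Stdlib Require Import Reals.
Open Scope R_scope.

Record C := mkC { Re : R; Im : R }.
Definition C0 : C := mkC 0 0.
Definition Cadd (z w : C) : C := mkC (Re z + Re w) (Im z + Im w).
Definition Csub (z w : C) : C := mkC (Re z - Re w) (Im z - Im w).
Definition Cmul (z w : C) : C :=
  mkC (Re z * Re w - Im z * Im w) (Re z * Im w + Im z * Re w).
Definition Cconj (z : C) : C := mkC (Re z) (- Im z).
Definition Cscale (r : R) (z : C) : C := mkC (r * Re z) (r * Im z).

Fixpoint CsumN (f : nat -> C) (N : nat) : C :=
  match N with O => C0 | S k => Cadd (CsumN f k) (f k) end.

Definition Cseries (f : nat -> C) (l : C) : Prop :=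
  infinite_sum (fun k => Re (f k)) (Re l) /\ infinite_sum (fun k => Im (f k)) (Im l).

(* Matrix of an operator in the Fock basis: M m n = <m|M|n>. *)
Definition Mat := nat -> nat -> C.

(* Positive semidefinite: <v|M|v> is real and >= 0 for every finitely
   supported vector v (support in {0..N-1}). *)
Definition psd (M : Mat) : Prop :=
  forall (N : nat) (v : nat -> C),
    let q := CsumN (fun i => CsumN (fun j =>
               Cmul (Cconj (v i)) (Cmul (M i j) (v j))) N) N in
    Im q = 0 /\ 0 <= Re q.

Definition is_density (rho : Mat) : Prop :=
  psd rho /\ infinite_sum (fun n => Re (rho n n)) 1.

(* tr[rho H^k] = sum_n n^k <n|rho|n> converges to s. *)
Definition tr_H_pow (rho : Mat) (k : nat) (s : R) : Prop :=
  infinite_sum (fun n => INR n ^ k * Re (rho n n)) s.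

Definition tr_is (M : Mat) (t : R) : Prop :=
  infinite_sum (fun n => Re (M n n)) t.

(* a rho a^dagger :  <m| a rho a^+ |n> = sqrt(m+1) sqrt(n+1) <m+1|rho|n+1>. *)
Definition sub_ideal (rho : Mat) : Mat :=
  fun m n => Cscale (sqrt (INR m + 1) * sqrt (INR n + 1)) (rho (S m) (S n)).

(* N_-(gamma)[rho] = (e^{2 gamma}-1) a e^{-gamma H} rho e^{-gamma H} a^dagger. *)
Definition N_minus (gamma : R) (rho : Mat) : Mat :=
  fun m n => Cscale ((exp (2 * gamma) - 1)
                     * (sqrt (INR m + 1) * exp (- gamma * (INR m + 1)))
                     * (sqrt (INR n + 1) * exp (- gamma * (INR n + 1))))
                    (rho (S m) (S n)).

(* ||X||_1 = tr sqrt(X^dagger X) = t : S is the positive square root of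
   X^dagger X (S psd, S*S = X^dagger X entrywise, both products being
   convergent series), and tr S = t. *)
Definition trace_norm_is (X : Mat) (t : R) : Prop :=
  exists S : Mat,
    psd S /\
    (forall m n, exists z : C,
        Cseries (fun k => Cmul (Cconj (X k m)) (X k n)) z /\
        Cseries (fun k => Cmul (S m k) (S k n)) z) /\
    tr_is S t.

(* Main.v *)
Require Import Defs.
From Stdlib Require Import Reals Lra Lia FunctionalExtensionality.
Open Scope R_scope.

Definition pt (j : nat) (c : R) (k : nat) : R := if Nat.eqb k j then c else 0.

Lemma pt_partial j c n : sum_f_R0 (pt j c) n = if Nat.leb j n then c else 0.
Proof.
  induction n as [|n IH].
  - simpl. unfold pt. destruct j; reflexivity.
  - simpl sum_f_R0. rewrite IH. unfold pt.
    destruct (Nat.leb_spec j n), (Nat.eqb_spec (S n) j), (Nat.leb_spec j (S n));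
      try lia; ring.
Qed.

Lemma pt_sum j c : infinite_sum (pt j c) c.
Proof.
  intros eps He. exists j. intros n Hn. rewrite pt_partial.
  destruct (Nat.leb_spec j n); [|lia].
  unfold Rdist. replace (c - c) with 0 by ring. rewrite Rabs_R0. lra.
Qed.

Lemma isum_plus f g a b : infinite_sum f a -> infinite_sum g b ->
  infinite_sum (fun k => f k + g k) (a + b).
Proof.
  intros Hf Hg. assert (H := CV_plus _ _ _ _ Hf Hg).
  intros eps He. destruct (H eps He) as [N HN]. exists N. intros n Hn.
  rewrite plus_sum. apply HN; auto.
Qed.

Lemma isum_ext f g l : infinite_sum f l -> (forall k, f k = g k) -> infinite_sum g l.
Proof.
  intros H E. assert (f = g) by (apply functional_extensionality; auto). subst; auto.
Qed.

Lemma CsumN_nonneg (f : nat -> Defs.C) N :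
  (forall k, Im (f k) = 0 /\ 0 <= Re (f k)) -> Im (CsumN f N) = 0 /\ 0 <= Re (CsumN f N).
Proof.
  intros H. induction N as [|N IH]; simpl.
  - lra.
  - destruct IH, (H N). split; lra.
Qed.

Lemma diag_psd (M : Mat) (s : nat -> R) :
  (forall i j, Re (M i j) = if Nat.eqb i j then s i else 0) ->
  (forall i j, Im (M i j) = 0) -> (forall i, 0 <= s i) -> psd M.
Proof.
  intros HR HI Hs N v. simpl.
  apply CsumN_nonneg. intros i. apply CsumN_nonneg. intros j.
  simpl. rewrite HR, HI. destruct (Nat.eqb_spec i j).
  - subst. specialize (Hs j). split; [ring|]. nra.
  - split; ring_simplify; lra.
Qed.

Lemma diag_series (X S : Mat) (xd sd : nat -> R) :
  (forall i j, Re (X i j) = if Nat.eqb i j then xd i else 0) ->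
  (forall i j, Im (X i j) = 0) ->
  (forall i j, Re (S i j) = if Nat.eqb i j then sd i else 0) ->
  (forall i j, Im (S i j) = 0) ->
  (forall k, xd k * xd k = sd k * sd k) ->
  forall m n, exists z : Defs.C,
    Cseries (fun k => Cmul (Cconj (X k m)) (X k n)) z /\
    Cseries (fun k => Cmul (S m k) (S k n)) z.
Proof.
  intros XR XI SR SI Hxs m n.
  exists (mkC (if Nat.eqb m n then sd m * sd m else 0) 0).
  split; split; simpl.
  - apply isum_ext with (pt m (if Nat.eqb m n then sd m * sd m else 0)).
    + apply pt_sum.
    + intros k. rewrite !XR, !XI. unfold pt.
      destruct (Nat.eqb_spec k m), (Nat.eqb_spec k n), (Nat.eqb_spec m n);
        subst; try lia; try rewrite Hxs; ring.
  - apply isum_ext with (pt m 0).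
    + apply pt_sum.
    + intros k. rewrite !XI. unfold pt. destruct (Nat.eqb k m); ring.
  - apply isum_ext with (pt m (if Nat.eqb m n then sd m * sd m else 0)).
    + apply pt_sum.
    + intros k. rewrite !SR, !SI. unfold pt.
      destruct (Nat.eqb_spec k m), (Nat.eqb_spec m k), (Nat.eqb_spec k n), (Nat.eqb_spec m n);
        subst; try lia; ring.
  - apply isum_ext with (pt m 0).
    + apply pt_sum.
    + intros k. rewrite !SI. unfold pt. destruct (Nat.eqb k m); ring.
Qed.

Lemma sqh A x e q : A * (sqrt x * e) * (sqrt x * e) * q = A * (sqrt x * sqrt x) * (e*e) * q.
Proof. ring. Qed.

Theorem proposition4 :
  forall gamma E : R, 0 < gamma -> 0 < E ->
  exists (rho : Mat) (s tm tn t : R),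
    is_density rho /\
    tr_H_pow rho 2 s /\ 0 < s /\ s <= E /\
    tr_is (sub_ideal rho) tm /\ 0 < tm /\
    tr_is (N_minus gamma rho) tn /\ 0 < tn /\
    trace_norm_is
      (fun m n => Csub (Cscale (/ tm) (sub_ideal rho m n))
                       (Cscale (/ tn) (N_minus gamma rho m n))) t /\
    1 <= t.
Proof.
  intros gamma E Hg HE.
  destruct (archimed_cor1 (gamma/2)) as [M [HM1 HM0]]; [lra|].
  assert (HMpos : 0 < INR M) by (apply lt_0_INR; lia).
  assert (HgM : 2 < gamma * INR M).
  { apply Rinv_lt_contravar in HM1; [|apply Rmult_lt_0_compat; [apply Rinv_0_lt_compat|]; lra].
    rewrite Rinv_inv in HM1. replace (/ (gamma/2)) with (2/gamma) in HM1 by (field; lra).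
    apply (Rmult_lt_compat_l gamma) in HM1; [|lra].
    replace (gamma * (2/gamma)) with 2 in HM1 by (field; lra). lra. }
  set (K := INR M + 1).
  assert (HK : 2 <= K).
  { unfold K. assert (1 <= INR M) by (apply (le_INR 1); lia). lra. }
  set (Em := Rmin E (1/2)).
  assert (HEm : 0 < Em /\ Em <= E /\ Em <= 1/2).
  { unfold Em; split; [apply Rmin_pos; lra|split; [apply Rmin_l|apply Rmin_r]]. }
  set (p := Em / (1 + 3*K)).
  set (r := 3 * p / K).
  assert (Hp : 0 < p) by (unfold p; apply Rdiv_lt_0_compat; lra).
  assert (Hr : 0 < r) by (unfold r; apply Rdiv_lt_0_compat; lra).
  assert (Hpr : p + r <= 1).
  { assert (p * (1 + 3*K) = Em) by (unfold p; field; lra).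
    assert (r * K = 3 * p) by (unfold r; field; lra). nra. }
  set (w := fun k => pt 0 (1 - p - r) k + pt 1 p k + pt (S M) r k).
  set (rho := fun m n : nat => mkC (if Nat.eqb m n then w m else 0) 0 : Defs.C).
  set (c := exp (2*gamma) - 1).
  assert (Hc : 0 < c).
  { unfold c. assert (1 + 2*gamma < exp (2*gamma)) by (apply exp_ineq1; lra). lra. }
  set (e0 := exp (- gamma * (INR 0 + 1))).
  set (eN := exp (- gamma * (INR M + 1))).
  assert (He0 : 0 < e0) by apply exp_pos.
  assert (HeN : 0 < eN) by apply exp_pos.
  assert (HeNe0 : 3 * eN <= e0).
  { unfold eN, e0. replace (- gamma * (INR M + 1)) with (- gamma * (INR 0 + 1) + - (gamma * INR M))
      by (simpl; ring).
    rewrite exp_plus, exp_Ropp.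
    assert (1 + gamma * INR M < exp (gamma * INR M)) by (apply exp_ineq1; lra).
    assert (0 < exp (- gamma * (INR 0 + 1))) by apply exp_pos.
    assert (/ exp (gamma * INR M) <= 1/3).
    { replace (1/3) with (/3) by field. apply Rinv_le_contravar; lra. }
    nra. }
  set (tm := 4 * p).
  set (tn := c * p * (e0 * e0 + 3 * (eN * eN))).
  set (d := e0 * e0 / (e0 * e0 + 3 * (eN * eN)) - 1/4).
  assert (Hd : 1/2 <= d).
  { unfold d. assert (3 * (eN * eN) <= e0 * e0 / 3) by nra.
    assert (3/4 <= e0 * e0 / (e0 * e0 + 3 * (eN * eN))).
    { assert (0 < e0 * e0 + 3 * (eN * eN)) by nra.
      assert (e0 * e0 / (e0 * e0 + 3 * (eN * eN)) - 3/4 =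
              (e0 * e0 - 9 * (eN * eN)) / (4 * (e0 * e0 + 3 * (eN * eN)))) by (field; lra).
      assert (0 <= (e0 * e0 - 9 * (eN * eN)) / (4 * (e0 * e0 + 3 * (eN * eN)))).
      { apply Rmult_le_pos; [nra|]. left; apply Rinv_0_lt_compat; lra. }
      lra. }
    lra. }
  assert (HwS : forall n, w (S n) = pt 0 p n + pt M r n).
  { intros n. unfold w, pt. simpl Nat.eqb.
    destruct n; simpl; [|destruct (Nat.eqb n M)]; ring. }
  assert (Hsq : forall n, sqrt (INR n + 1) * sqrt (INR n + 1) = INR n + 1).
  { intros n. apply sqrt_sqrt. assert (0 <= INR n) by apply pos_INR. lra. }
  assert (HM0' : M <> 0%nat) by lia.
  exists rho, (p * (1 + 3 * K)), tm, tn, (2 * d).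
  split; [|split; [|split; [|split; [|split; [|split; [|split; [|split; [|split]]]]]]]].
  -
    split.
    + apply diag_psd with w; [intros; reflexivity|intros; reflexivity|].
      intros i. unfold w, pt.
      destruct (Nat.eqb i 0), (Nat.eqb i 1), (Nat.eqb i (S M)); lra.
    + unfold rho. simpl. apply isum_ext with w.
      * replace 1 with (1 - p - r + p + r) by ring.
        apply isum_plus; [apply isum_plus|]; apply pt_sum.
      * intros k. rewrite Nat.eqb_refl. reflexivity.
  -
    unfold tr_H_pow. apply isum_ext with (fun k => pt 1 p k + pt (S M) (K * K * r) k).
    + replace (p * (1 + 3 * K)) with (p + K * K * r) by (unfold r; field; lra).
      apply isum_plus; apply pt_sum.
    + intros k. unfold rho. simpl Re. rewrite Nat.eqb_refl. unfold w, pt.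
      destruct (Nat.eqb_spec k 0), (Nat.eqb_spec k 1), (Nat.eqb_spec k (S M)); subst;
        try lia; try (rewrite S_INR; fold K); simpl; ring.
  - nra.
  - replace (p * (1 + 3 * K)) with Em by (unfold p; field; lra). lra.
  -
    unfold tr_is, tm. apply isum_ext with (fun k => pt 0 p k + pt M (3 * p) k).
    + replace (4 * p) with (p + 3 * p) by ring. apply isum_plus; apply pt_sum.
    + intros k. unfold sub_ideal, rho. simpl Re. rewrite Nat.eqb_refl, HwS, Hsq.
      unfold pt. destruct (Nat.eqb_spec k 0), (Nat.eqb_spec k M); subst; try lia.
      * simpl. ring.
      * fold K. unfold r. field. lra.
      * ring.
  - unfold tm; lra.
  -
    unfold tr_is, tn. apply isum_ext with (fun k => pt 0 (c * p * (e0 * e0)) k + pt M (c * p * (3 * (eN * eN))) k).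
    + replace (c * p * (e0 * e0 + 3 * (eN * eN))) with (c * p * (e0 * e0) + c * p * (3 * (eN * eN))) by ring.
      apply isum_plus; apply pt_sum.
    + intros k. unfold N_minus, rho. simpl Re. rewrite Nat.eqb_refl, HwS.
      unfold pt. destruct (Nat.eqb_spec k 0), (Nat.eqb_spec k M); subst; try lia.
      * rewrite sqh, Hsq. fold e0 c. change (INR 0) with 0. ring.
      * rewrite sqh, Hsq. fold eN c K. unfold r. field. lra.
      * ring.
  - unfold tn. apply Rmult_lt_0_compat; [apply Rmult_lt_0_compat|]; nra.
  - set (sd := fun k => pt 0 d k + pt M d k).
    set (xd := fun k => / tm * (sqrt (INR k + 1) * sqrt (INR k + 1) * w (S k)) -
       / tn * ((exp (2 * gamma) - 1) * (sqrt (INR k + 1) * exp (- gamma * (INR k + 1))) *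
               (sqrt (INR k + 1) * exp (- gamma * (INR k + 1))) * w (S k))).
    exists (fun m n => mkC (if Nat.eqb m n then sd m else 0) 0).
    split; [|split].
    + apply diag_psd with sd; [intros; reflexivity|intros; reflexivity|].
      intros i; unfold sd, pt. destruct (Nat.eqb i 0), (Nat.eqb i M); lra.
    + apply diag_series with xd sd; try (intros; reflexivity).
      * intros i j. unfold sub_ideal, N_minus, rho, xd. simpl.
        destruct (Nat.eqb_spec i j); [subst; ring|ring].
      * intros i j. unfold sub_ideal, N_minus, rho. simpl. ring.
      * intros k. unfold xd, sd. rewrite sqh, Hsq, HwS. unfold pt.
        destruct (Nat.eqb_spec k 0), (Nat.eqb_spec k M); subst; try lia.
        -- fold e0 c. change (INR 0) with 0. unfold tm, tn, d. field. 
           repeat split; try nra; lra.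
        -- fold eN c K. unfold tm, tn, d, r. field. split; [nra|]. split; lra.
        -- ring.
    + unfold tr_is. simpl. apply isum_ext with sd.
      * replace (2 * d) with (d + d) by ring. apply isum_plus; apply pt_sum.
      * intros k; rewrite Nat.eqb_refl; reflexivity.
  - lra.
Qed.
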